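(* Let $S\in\mathbb N$, $I\in\mathbb N$, $\eta>0$, $\kappa_r>0$, $\lambda>0$, and let $\rho_b,\rho_d,\kappa_i:\mathbb N\to[0,\infty)$ be bounded with $\rho_b(0)=\rho_d(0)=\kappa_i(0)=0$. Let $\mathbf X=\{0,\dots,S\}\times\mathbb N\times\{0,\dots,S+I\}$. Suppose $v:\mathbb N\to\mathbb R$ is bounded and satisfies, for every $c\in\mathbb N$, $v(c)=\min\Big\{\frac{\rho_b(c)v(c+1)+\rho_d(c)v(c-1)+\frac{\kappa_i(c)}{\eta+\kappa_r}}{\eta+\rho_b(c)+\rho_d(c)+\kappa_i(c)};\ \lambda\Big\}\qquad(\ast)$ (the term $\rho_d(0)v(-1)$ being $0$). Then $V(s,c,i)=s\,v(c)+\frac{i}{\eta+\kappa_r}$ is a bounded solution on $\mathbf X$ of the system $(\ast\ast)$: for $s\ge1$, $\min\Big\{-\eta V(s,c,i)+\rho_b(c)V(s,c+1,i)+\rho_d(c)V(s,c-1,i)+s\kappa_i(c)V(s-1,c,i+1)+i\kappa_rV(s,c,i-1)-V(s,c,i)[\rho_b(c)+\rho_d(c)+s\kappa_i(c)+i\kappa_r]+i;\ -V(s,c,i)+V(s-1,c,i)+\lambda\Big\}=0,$ and for $s=0$, $-\eta V(0,c,i)+\rho_b(c)V(0,c+1,i)+\rho_d(c)V(0,c-1,i)+i\kappa_rV(0,c,i-1)-V(0,c,i)[\rho_b(c)+\rho_d(c)+i\kappa_r]+i=0$ (terms with a zero coefficient are taken to be $0$). Moreover, for $(s,c,i)\in\mathbf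 X$ with $s\ge1$, the first (respectively, second) expression inside the minimum in $(\ast)$ equals $v(c)$ if and only if the first (respectively, second) expression inside the minimum in $(\ast\ast)$ equals zero.
   Context: This is the Bellman equation of an epidemic model with carriers: state $(s,c,i)$ = numbers of susceptibles, carriers and infectives; carriers follow a birth-death process with rates $\rho_b(c),\rho_d(c)$; each susceptible becomes infective at rate $\kappa_i(c)$; each infective recovers at rate $\kappa_r$; cost rate $i$; impulsive action immunizes one susceptible $(s,c,i)\to(s-1,c,i)$ at cost $\lambda$; discount factor $\eta$. *)

(* Defs.v *)
From Stdlib Require Import Reals.
Open Scope R_scope.

Definition bounded_nonneg (f : nat -> R) : Prop :=
  exists M : R, forall c : nat, 0 <= f c <= M.

Definition bounded_fun (f : nat -> R) : Prop :=
  exists M : R, forall c : nat, Rabs (f c) <= M.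

(* First expression inside the min in (star).  For c = 0 the term
   rho_d(0) v(c-1) uses truncated subtraction (v 0), but rho_d 0 = 0,
   so the term is 0 as in the paper. *)
Definition star_first (eta kr : R) (rb rd ki v : nat -> R) (c : nat) : R :=
  (rb c * v (S c) + rd c * v (pred c) + ki c / (eta + kr))
  / (eta + rb c + rd c + ki c).

Definition Vfun (eta kr : R) (v : nat -> R) (s c i : nat) : R :=
  INR s * v c + INR i / (eta + kr).

(* First expression inside the min in (HJB) (for s >= 1).  Indices c-1, i-1, s-1
   are truncated; whenever they would be negative the coefficient vanishes. *)
Definition hjb_first (eta kr : R) (rb rd ki : nat -> R) (V : nat -> nat -> nat -> R)
  (s c i : nat) : R :=
  - eta * V s c i + rb c * V s (S c) i + rd c * V s (pred c) i
  + INR s * ki c * V (pred s) c (S i) + INR i * kr * V s c (pred i)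
  - V s c i * (rb c + rd c + INR s * ki c + INR i * kr) + INR i.

Definition hjb_second (lam : R) (V : nat -> nat -> nat -> R) (s c i : nat) : R :=
  - V s c i + V (pred s) c i + lam.

Definition hjb_zero (eta kr : R) (rb rd : nat -> R) (V : nat -> nat -> nat -> R)
  (c i : nat) : R :=
  - eta * V 0%nat c i + rb c * V 0%nat (S c) i + rd c * V 0%nat (pred c) i
  + INR i * kr * V 0%nat c (pred i)
  - V 0%nat c i * (rb c + rd c + INR i * kr) + INR i.

(* Main.v *)
Require Import Defs.
From Stdlib Require Import Reals Lra Lia.
Open Scope R_scope.

Definition numer (eta kr : R) (rb rd ki v : nat -> R) (c : nat) : R :=
  rb c * v (S c) + rd c * v (pred c) + ki c / (eta + kr).

Lemma hjb_first_eq eta kr rb rd ki v s c i : 0 < eta -> 0 < kr -> (1 <= s)%nat ->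
  hjb_first eta kr rb rd ki (Vfun eta kr v) s c i =
  INR s * (numer eta kr rb rd ki v c - (eta + rb c + rd c + ki c) * v c).
Proof.
  intros He Hk Hs. destruct s as [|s']; [lia|].
  unfold hjb_first, Vfun, numer. simpl pred.
  destruct i as [|i']; simpl pred; rewrite ?S_INR; simpl INR; field; lra.
Qed.

Lemma hjb_second_eq lam eta kr v s c i : (1 <= s)%nat ->
  hjb_second lam (Vfun eta kr v) s c i = lam - v c.
Proof.
  intros Hs. destruct s as [|s']; [lia|].
  unfold hjb_second, Vfun. simpl pred. rewrite S_INR. ring.
Qed.

Lemma hjb_zero_eq eta kr rb rd v c i : 0 < eta -> 0 < kr ->
  hjb_zero eta kr rb rd (Vfun eta kr v) c i = 0.
Proof.
  intros He Hk. unfold hjb_zero, Vfun.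
  destruct i as [|i']; simpl pred; rewrite ?S_INR; simpl INR; field; lra.
Qed.

Lemma star_eq eta kr rb rd ki v c : 0 < eta -> 0 <= rb c -> 0 <= rd c -> 0 <= ki c ->
  star_first eta kr rb rd ki v c = numer eta kr rb rd ki v c / (eta + rb c + rd c + ki c).
Proof. intros. reflexivity. Qed.

Theorem lemma5p1 (S I : nat) (eta kr lam : R) (rb rd ki v : nat -> R)
  (Heta : 0 < eta) (Hkr : 0 < kr) (Hlam : 0 < lam)
  (Hrb : bounded_nonneg rb) (Hrd : bounded_nonneg rd) (Hki : bounded_nonneg ki)
  (Hrb0 : rb 0%nat = 0) (Hrd0 : rd 0%nat = 0) (Hki0 : ki 0%nat = 0)
  (Hv : bounded_fun v)
  (Hstar : forall c : nat, v c = Rmin (star_first eta kr rb rd ki v c) lam) :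
  (* V is bounded on X = {0..S} x N x {0..S+I} *)
  (exists M : R, forall s c i : nat, (s <= S)%nat -> (i <= S + I)%nat ->
      Rabs (Vfun eta kr v s c i) <= M)
  /\
  (* (HJB) for s >= 1 *)
  (forall s c i : nat, (1 <= s <= S)%nat -> (i <= S + I)%nat ->
      Rmin (hjb_first eta kr rb rd ki (Vfun eta kr v) s c i)
           (hjb_second lam (Vfun eta kr v) s c i) = 0)
  /\
  (* (HJB) for s = 0 *)
  (forall c i : nat, (i <= S + I)%nat ->
      hjb_zero eta kr rb rd (Vfun eta kr v) c i = 0)
  /\
  (* correspondence of the active branches *)
  (forall s c i : nat, (1 <= s <= S)%nat -> (i <= S + I)%nat ->
      (star_first eta kr rb rd ki v c = v c <->
         hjb_first eta kr rb rd ki (Vfun eta kr v) s c i = 0)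
      /\
      (lam = v c <-> hjb_second lam (Vfun eta kr v) s c i = 0)).
Proof.
  destruct Hrb as [Mb Hb]. destruct Hrd as [Md Hd]. destruct Hki as [Mk Hk].
  destruct Hv as [Mv HMv].
  assert (Hpos : forall c, 0 < eta + rb c + rd c + ki c).
  { intro c. specialize (Hb c); specialize (Hd c); specialize (Hk c). lra. }
  assert (Hkey : forall c, star_first eta kr rb rd ki v c - v c =
     (numer eta kr rb rd ki v c - (eta + rb c + rd c + ki c) * v c)
       / (eta + rb c + rd c + ki c)).
  { intro c. unfold star_first, numer. field. specialize (Hpos c). lra. }
  assert (Hle : forall c, v c <= star_first eta kr rb rd ki v c /\ v c <= lam /\
     (v c = star_first eta kr rb rd ki v c \/ v c = lam)).
  { intro c. pose proof (Hstar c) as H. unfold Rmin in H.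
    destruct (Rle_dec _ _); lra. }
  assert (Hnum : forall c, (numer eta kr rb rd ki v c - (eta + rb c + rd c + ki c) * v c = 0
      <-> star_first eta kr rb rd ki v c = v c) /\
      0 <= numer eta kr rb rd ki v c - (eta + rb c + rd c + ki c) * v c).
  { intro c. specialize (Hkey c). specialize (Hpos c). destruct (Hle c) as [H1 _].
    set (N := numer eta kr rb rd ki v c - (eta + rb c + rd c + ki c) * v c) in *.
    assert (N = (star_first eta kr rb rd ki v c - v c) * (eta + rb c + rd c + ki c)).
    { rewrite Hkey. field. lra. }
    split; [split; intro; nra | nra]. }
  split; [|split; [|split]].
  - exists (INR S * Mv + INR (S + I) / (eta + kr)). intros s c i Hs Hi.
    unfold Vfun. eapply Rle_trans; [apply Rabs_triang|].
    rewrite Rabs_mult, (Rabs_right (INR s)) by (apply Rle_ge, pos_INR).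
    assert (INR s <= INR S) by (apply le_INR; lia).
    assert (INR i <= INR (S+I)) by (apply le_INR; lia).
    assert (0 <= INR i) by apply pos_INR.
    assert (0 <= Mv) by (specialize (HMv 0%nat); pose proof (Rabs_pos (v 0%nat)); lra).
    specialize (HMv c). pose proof (pos_INR s).
    rewrite (Rabs_right (INR i / (eta + kr))).
    + apply Rplus_le_compat; [apply Rmult_le_compat; auto; apply Rabs_pos|]. unfold Rdiv. apply Rmult_le_compat_r; [|lra].
      left; apply Rinv_0_lt_compat; lra.
    + apply Rle_ge. unfold Rdiv. apply Rmult_le_pos; [lra|]. left; apply Rinv_0_lt_compat; lra.
  - intros s c i Hs Hi. rewrite hjb_first_eq, hjb_second_eq by (auto; lia).
    destruct (Hnum c) as [[Ha Hb'] Hn]. destruct (Hle c) as [_ [H2 H3]].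
    assert (1 <= INR s) by (change 1 with (INR 1); apply le_INR; lia).
    set (N := numer eta kr rb rd ki v c - (eta + rb c + rd c + ki c) * v c) in *.
    assert (N = 0 \/ lam - v c = 0) by (destruct H3; [left; apply Hb'; auto | right; lra]).
    unfold Rmin; destruct (Rle_dec _ _) as [Hr|Hr]; destruct H0; nra.
  - intros c i _. apply hjb_zero_eq; auto.
  - intros s c i Hs Hi. rewrite hjb_first_eq, hjb_second_eq by (auto; lia).
    destruct (Hnum c) as [[Ha Hb'] Hn].
    assert (1 <= INR s) by (change 1 with (INR 1); apply le_INR; lia).
    split; split; intro HH; try lra.
    + rewrite Hb' by lra. ring.
    + apply Ha. apply Rmult_integral in HH. destruct HH; [lra|auto].
Qed.
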